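(* Let $R$ be a GWNC ring. Then the Jacobson radical $J(R)$ is nil.
   Context: All rings are associative with identity. For a ring $S$, $U(S)$, ${\rm Nil}(S)$, ${\rm Id}(S)$ denote units, nilpotents, idempotents. $S$ is GWNC if every $a\in S\setminus U(S)$ can be written as $a=q+e$ or $a=q-e$ with $q\in{\rm Nil}(S)$, $e\in{\rm Id}(S)$. *)

(* Defs.v *)
From HB Require Import structures.
From mathcomp Require Import all_boot all_order all_algebra.
Set Implicit Arguments. Unset Strict Implicit. Unset Printing Implicit Defensive.
Import GRing.Theory.
Local Open Scope ring_scope.

Section Defs.
Variable R : pzRingType.

Definition is_unit (a : R) : Prop := exists b : R, a * b = 1 /\ b * a = 1.
Definition is_nilpotent (a : R) : Prop := exists n : nat, a ^+ n = 0.
Definition is_idempotent (e : R) : Prop := e * e = e.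

Definition GWNC : Prop :=
  forall a : R, ~ is_unit a ->
    exists q e : R, is_nilpotent q /\ is_idempotent e /\ (a = q + e \/ a = q - e).

Definition left_ideal (I : R -> Prop) : Prop :=
  I 0 /\ (forall x y, I x -> I y -> I (x + y)) /\ (forall r x, I x -> I (r * x)).

Definition maximal_left_ideal (M : R -> Prop) : Prop :=
  left_ideal M /\ ~ M 1 /\
  forall I : R -> Prop, left_ideal I -> (forall x, M x -> I x) ->
    (forall x, I x <-> M x) \/ (forall x, I x).

Definition jacobson (x : R) : Prop :=
  forall M : R -> Prop, maximal_left_ideal M -> M x.

Definition nil_set (S : R -> Prop) : Prop := forall x, S x -> is_nilpotent x.
End Defs.

(* Main.v *)
Require Import Defs.
From mathcomp Require Import all_boot all_order all_algebra.
From mathcomp Require Import boolp classical_sets.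
Set Warnings "-notation-overridden,-ambiguous-paths".

Set Implicit Arguments. Unset Strict Implicit. Unset Printing Implicit Defensive.
Import GRing.Theory.

Section Aux.
Local Open Scope ring_scope.
Variable R : pzRingType.

Lemma li_mul (I : R -> Prop) r x : left_ideal I -> I x -> I (r * x).
Proof. by case=> _ [_ H]; apply: H. Qed.
Lemma li_add (I : R -> Prop) x y : left_ideal I -> I x -> I y -> I (x + y).
Proof. by case=> _ [H _]; apply: H. Qed.
Lemma li_0 (I : R -> Prop) : left_ideal I -> I 0.
Proof. by case. Qed.

Lemma exists_max (I : R -> Prop) : left_ideal I -> ~ I 1 ->
  exists M, maximal_left_ideal M /\ (forall x, I x -> M x).
Proof.
move=> hI hI1.
pose P : set (set R) := fun A => A = set0 \/ (left_ideal A /\ ~ A 1 /\ (forall x, I x -> A x)).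
have memP A z : P A -> A z -> left_ideal A /\ ~ A 1 /\ (forall x, I x -> A x).
  by case=> // -> .
have [A [PA Amax]] : exists A, P A /\ forall B, (A `<` B)%classic -> ~ P B.
  apply: Zorn_bigcup => F FP Ftot.
  have [[X0 [FX0 X00]]|nX] := pselect (exists X, F X /\ X 0).
    right.
    have [I0 [nI1 IsubX]] := memP _ _ (FP _ FX0) X00.
    split; last split.
    - split; first by exists X0.
      split.
        move=> x y [X FX Xx] [Y FY Yy].
        have [XY|YX] := Ftot _ _ FX FY.
          exists Y => //; apply: (li_add _ (XY _ Xx) Yy).
          by case: (memP _ _ (FP _ FY) Yy).
        exists X => //; apply: (li_add _ Xx (YX _ Yy)).
        by case: (memP _ _ (FP _ FX) Xx).
      move=> r x [X FX Xx]; exists X => //; exact: (li_mul r (proj1 (memP _ _ (FP _ FX) Xx)) Xx).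
    - move=> [X FX X1]; have [_ [] //] := memP _ _ (FP _ FX) X1.
    - by move=> x Ix; exists X0 => //; apply: IsubX.
  left; rewrite predeqE => x; split => // -[X FX Xx].
  apply: nX; exists X; split => //.
  by case: (memP _ _ (FP _ FX) Xx) => h _; apply: li_0.
have [A0|[hA [nA1 IA]]] := PA.
  exfalso; apply: (Amax I); last by right.
  rewrite A0; split; first by [].
  by move=> h; have := h 0 (li_0 hI).
exists A; split => //; split => //; split => // J hJ AJ.
have [J1|nJ1] := pselect (J 1).
  by right => x; rewrite -(mulr1 x); apply: li_mul.
have [eq|neq] := pselect (forall x, J x <-> A x); first by left.
exfalso; apply: (Amax J).
  split => // JA; apply: neq => x; split; [exact: JA | exact: AJ].
by right; split => //; split => // x /IA /AJ.
Qed.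


Definition Qp (x : R) := forall r, exists s, s * (1 - r * x) = 1.

Lemma J_Q x : jacobson x -> Qp x.
Proof.
move=> Jx r.
pose I := fun y : R => exists s, y = s * (1 - r * x).
have hI : left_ideal I.
  split; first by exists 0; rewrite mul0r.
  split.
    by move=> a b [s ->] [t ->]; exists (s + t); rewrite mulrDl.
  by move=> a b [s ->]; exists (a * s); rewrite mulrA.
have [I1|nI1] := pselect (I 1).
  by case: I1 => s hs; exists s; rewrite -hs.
have [M [hM IM]] := exists_max hI nI1.
have Mx := Jx M hM.
case: hM => hMl [nM1 _]; exfalso; apply: nM1.
have -> : (1 : R) = (1 - r * x) + r * x by rewrite subrK.
apply: li_add => //; last exact: li_mul.
by apply: IM; exists 1; rewrite mul1r.
Qed.

Lemma Q_J x : Qp x -> jacobson x.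
Proof.
move=> Qx M [hM [nM1 Mmax]].
have [//|nMx] := pselect (M x).
pose I := fun y : R => exists m r, M m /\ y = m + r * x.
have hI : left_ideal I.
  split; first by exists 0, 0; rewrite mul0r addr0; split => //; apply: li_0.
  split.
    move=> a b [m [r [Mm ->]]] [m' [r' [Mm' ->]]]; exists (m + m'), (r + r').
    split; first exact: li_add.
    by rewrite mulrDl addrACA.
  move=> a b [m [r [Mm ->]]]; exists (a * m), (a * r); split; first exact: li_mul.
  by rewrite mulrDr mulrA.
have hsub : forall y, M y -> I y by move=> y My; exists y, 0; rewrite mul0r addr0.
have [heq|hall] := Mmax I hI hsub.
  exfalso; apply: nMx; apply: (proj1 (heq x)); exists 0, 1; split; [exact: li_0 | by rewrite mul1r add0r].
have [m [r [Mm e1]]] := hall 1.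
have [s hs] := Qx r.
exfalso; apply: nM1; rewrite -hs.
have -> : 1 - r * x = m by rewrite e1 addrK.
exact: li_mul.
Qed.

Lemma J_add (x y : R) : jacobson x -> jacobson y -> jacobson (x + y).
Proof. by move=> Jx Jy M hM; apply: li_add (proj1 hM) (Jx M hM) (Jy M hM). Qed.
Lemma J_mul (r x : R) : jacobson x -> jacobson (r * x).
Proof. by move=> Jx M hM; apply: li_mul (proj1 hM) (Jx M hM). Qed.
Lemma J_0 : jacobson (0 : R).
Proof. by move=> M hM; apply: li_0 (proj1 hM). Qed.

Lemma J_mulr (x t : R) : jacobson x -> jacobson (x * t).
Proof.
move=> /J_Q Qx; apply: Q_J => r.
have [s0 hs0] := Qx (t * r).
exists (1 + r * x * s0 * t).
set a := r * x.
have ht : t * (1 - a * t) = (1 - t * a) * t.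
  by rewrite mulrBr mulrBl mulr1 mul1r mulrA.
have hs1 : s0 * (1 - t * a) = 1 by rewrite /a mulrA.
have h2 : a * s0 * t * (1 - a * t) = a * t.
  by rewrite -mulrA ht mulrA -(mulrA a s0) hs1 mulr1.
by rewrite mulrA -/a mulrDl mul1r h2 subrK.
Qed.

Lemma Q_idem (e : R) : Qp e -> is_idempotent e -> e = 0.
Proof.
move=> Qe ee; have [s hs] := Qe 1.
rewrite mul1r in hs.
have : s * (1 - e) * e = e by rewrite hs mul1r.
by rewrite -mulrA mulrBl mul1r ee subrr mulr0.
Qed.

Lemma key (y p e : R) : jacobson y -> is_nilpotent p -> is_idempotent e -> e = y + p -> e = 0.
Proof.
move=> Jy [n pn] ee he.
have hJ : forall k, jacobson ((y + p) ^+ k - p ^+ k).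
  elim => [|k IH]; first by rewrite !expr0 subrr; exact: J_0.
  have -> : (y + p) ^+ k.+1 - p ^+ k.+1 = ((y + p) ^+ k - p ^+ k) * (y + p) + p ^+ k * y.
    by rewrite !exprSr mulrBl [p ^+ k * (y + p)]mulrDr opprD addrA addrAC subrK.
  by apply: J_add; [exact: J_mulr | exact: J_mul].
have pn1 : p ^+ n.+1 = 0 by rewrite exprSr pn mul0r.
have een : forall k, e ^+ k.+1 = e.
  by elim => [|k IH]; [rewrite expr1 | rewrite exprSr IH ee].
have Je : jacobson e by have := hJ n.+1; rewrite pn1 subr0 -he een.
exact: Q_idem (J_Q Je) ee.
Qed.
End Aux.

Local Open Scope ring_scope.
Theorem lemma2p4 (R : pzRingType) : GWNC R -> nil_set (@jacobson R).
Proof.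
move=> G x Jx.
have [[b [xb bx]]|nu] := pselect (is_unit x).
  have [s hs] := J_Q Jx b.
  rewrite bx subrr mulr0 in hs.
  by exists 1%N; rewrite expr1 -(mulr1 x) -hs mulr0.
have [q [e [qn [ee [hx|hx]]]]] := G x nu.
  have e0 : e = 0.
    apply: (@key _ x (- q) e Jx _ ee); last by rewrite hx addrAC subrr add0r.
    by case: qn => n qn; exists n; rewrite exprNn qn mulr0.
  by rewrite hx e0 addr0.
have e0 : e = 0.
  apply: (@key _ (- x) q e _ qn ee); last by rewrite hx opprB subrK.
  by rewrite -mulN1r; apply: J_mul.
by rewrite hx e0 subr0.
Qed.
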